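(* Let $\mathscr{S}\subset\mathbb{Z}^2$ be a finite step set, $\theta\in[0,\pi/2)$, and $\delta>0$. Then there exists a context-free grammar with $\mathcal{O}(1/\delta)$ non-terminals and $\mathcal{O}(1/\delta^2)$ rules which generates a $\delta$-rational approximation $\mathrm{walks}(H_{\theta_r},\mathscr{S})$ of $\mathrm{walks}(H_\theta,\mathscr{S})$.
   Context: $H_\theta=\{(x,y):x\sin\theta+y\cos\theta\ge0\}$; $\mathrm{walks}(C,\mathscr{S})$ is the set of walks $x_0=(0,0),x_1,\dots,x_n$ ($n\ge0$) with $x_{j+1}-x_j\in\mathscr{S}$ and all $x_i\in C$. A half-plane model $\mathrm{walks}(H_{\theta_r},\mathscr{S})$ is a $\delta$-rational approximation of $\mathrm{walks}(H_\theta,\mathscr{S})$ if $\tan\theta_r\in\mathbb{Q}$ and $|\tan\theta-\tan\theta_r|\le\delta$. The grammar generates the walks as words over the alphabet $\mathscr{S}$. *)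

(* Defs.v *)
From Stdlib Require Import Reals ZArith List.
Import ListNotations.
Open Scope R_scope.

Definition step := (Z * Z)%type.

Definition inH (theta : R) (p : step) : Prop :=
  IZR (fst p) * sin theta + IZR (snd p) * cos theta >= 0.

Fixpoint vsum (w : list step) : step :=
  match w with
  | [] => (0%Z, 0%Z)
  | s :: w' => (fst s + fst (vsum w'), snd s + snd (vsum w'))%Z
  end.

(* The word w over the alphabet S encodes a walk in walks(H_theta, S):
   every letter is a step of S and all points x_0 = (0,0), x_1, ..., x_n
   (prefix sums) lie in H_theta. *)
Definition walk_word (S : list step) (theta : R) (w : list step) : Prop :=
  (forall s, In s w -> In s S) /\
  (forall k, (k <= length w)%nat -> inH theta (vsum (firstn k w))).

Definition is_rational (x : R) : Prop :=
  exists p q : Z, q <> 0%Z /\ x = IZR p / IZR q.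

Definition symbol := (nat + step)%type.

Record cfg := {
  nnt : nat;
  start : nat;
  rules : list (nat * list symbol)
}.

Definition cfg_wf (G : cfg) (S : list step) : Prop :=
  (start G < nnt G)%nat /\
  forall A rhs, In (A, rhs) (rules G) ->
    (A < nnt G)%nat /\
    forall x, In x rhs ->
      match x with
      | inl B => (B < nnt G)%nat
      | inr t => In t S
      end.

Inductive derives (G : cfg) : nat -> list step -> Prop :=
| der_rule : forall A rhs w,
    In (A, rhs) (rules G) -> derives_seq G rhs w -> derives G A w
with derives_seq (G : cfg) : list symbol -> list step -> Prop :=
| ds_nil : derives_seq G [] []
| ds_term : forall t rhs w,
    derives_seq G rhs w -> derives_seq G (inr t :: rhs) (t :: w)
| ds_nt : forall B rhs u w,
    derives G B u -> derives_seq G rhs w -> derives_seq G (inl B :: rhs) (u ++ w).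

Definition generates (G : cfg) (w : list step) : Prop := derives G (start G) w.

(* Main.v *)
Require Import Defs.
From Stdlib Require Import Reals ZArith List Lia Lra Psatz Arith Classical.
Import ListNotations.

Local Open Scope Z_scope.

Fixpoint sumh (h : step -> Z) (w : list step) : Z :=
  match w with [] => 0 | a :: w' => h a + sumh h w' end.

Fixpoint ok (h : step -> Z) (c : Z) (w : list step) : Prop :=
  0 <= c /\ match w with [] => True | a :: w' => ok h (c + h a) w' end.

Definition fpp (h : step -> Z) (c d : Z) (w : list step) : Prop :=
  exists w0 a, w = w0 ++ [a] /\ ok h c w0 /\ c + sumh h w0 + h a = - d.

Inductive Sseq (h : step -> Z) : Z -> list step -> Prop :=
| Snil : Sseq h 0 []
| Scons : forall e v x y, 1 <= e -> fpp h 0 e x -> Sseq h v y -> Sseq h (e + v) (x ++ y).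

Lemma sumh_app h x y : sumh h (x ++ y) = sumh h x + sumh h y.
Proof. induction x; simpl; lia. Qed.

Lemma ok_nonneg h c w : ok h c w -> 0 <= c.
Proof. destruct w; simpl; tauto. Qed.

Lemma ok_app h x : forall c y, ok h c (x ++ y) <-> ok h c x /\ ok h (c + sumh h x) y.
Proof.
  induction x as [|a x IH]; intros c y; simpl.
  - rewrite Z.add_0_r. split.
    + intro H. split; [split; [eapply ok_nonneg; eauto| exact I] | exact H].
    + tauto.
  - rewrite IH. rewrite Z.add_assoc. tauto.
Qed.

Lemma ok_mono h w : forall c c', ok h c w -> c <= c' -> ok h c' w.
Proof.
  induction w as [|a w IH]; simpl; intros c c' [H1 H2] Hc; split; try lia; auto.
  apply (IH (c + h a)); auto; lia.
Qed.

Lemma ok_end h c w : ok h c w -> 0 <= c + sumh h w.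
Proof.
  intro H. assert (H' : ok h c (w ++ [])) by (rewrite app_nil_r; exact H).
  apply ok_app in H' as [_ H']. eapply ok_nonneg; eauto.
Qed.

Lemma fpp_ok h d x c : fpp h 0 d x -> 0 <= d <= c -> ok h c x /\ sumh h x = - d.
Proof.
  intros [w0 [a [-> [H1 H2]]]] Hd. rewrite sumh_app. simpl. split; [|lia].
  apply ok_app. split.
  - eapply ok_mono; eauto; lia.
  - pose proof (ok_end _ _ _ H1). simpl. split; [lia|split; [lia|exact I]].
Qed.

Lemma Sseq_ok h v u : Sseq h v u -> ok h v u /\ sumh h u = - v /\ 0 <= v.
Proof.
  induction 1 as [|e v x y He Hx Hy [IH1 [IH2 IH3]]].
  - simpl. split; [split; [lia|exact I]|lia].
  - destruct (fpp_ok h e x (e+v) Hx ltac:(lia)) as [O1 S1].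
    rewrite sumh_app, ok_app. split; [split|lia].
    + exact O1.
    + replace (e + v + sumh h x) with v by lia. exact IH1.
Qed.

Lemma split_fp h w : forall t c, 0 <= t -> ok h (t + c) w -> ~ ok h t w ->
  exists e x1 w1, w = x1 ++ w1 /\ fpp h t e x1 /\ ok h (c - e) w1 /\ 1 <= e <= c.
Proof.
  induction w as [|a w IH]; intros t c Ht H1 H2.
  - exfalso; apply H2; simpl; split; [lia|exact I].
  - simpl in H1. destruct H1 as [H1a H1b].
    destruct (Z_lt_le_dec (t + h a) 0) as [Hn|Hp].
    + exists (-(t + h a)), [a], w. split; [reflexivity|]. split.
      * exists [], a. simpl. split; [reflexivity|]. split; [split; [lia|exact I]|lia].
      * split.
        -- replace (c - - (t + h a)) with (t + c + h a) by lia. exact H1b.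
        -- pose proof (ok_nonneg _ _ _ H1b). lia.
    + destruct (IH (t + h a) c Hp) as [e [x1 [w1 [E [F [O B]]]]]].
      * replace (t + h a + c) with (t + c + h a) by lia. exact H1b.
      * intro Hc. apply H2. simpl. split; [lia|exact Hc].
      * exists e, (a :: x1), w1. split; [simpl; congruence|]. split; [|tauto].
        destruct F as [w0 [b [E0 [O0 S0]]]]. exists (a :: w0), b.
        split; [simpl; congruence|]. split; [simpl; split; [lia|exact O0]|simpl; lia].
Qed.

Lemma key h : forall n w c, (length w <= n)%nat -> ok h c w ->
  exists v x y, w = x ++ y /\ Sseq h v x /\ ok h 0 y /\ 0 <= v <= c.
Proof.
  induction n as [|n IH]; intros w c Hl Hw;
  (destruct (classic (ok h 0 w)) as [H0|H0];
   [exists 0, [], w; split; [reflexivity|]; split; [constructor|]; split; [exact H0|];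
    pose proof (ok_nonneg _ _ _ Hw); lia|]).
  - exfalso. destruct w; [apply H0; simpl; split; [lia|exact I]|simpl in Hl; lia].
  - destruct (split_fp h w 0 c ltac:(lia) Hw H0) as [e [x1 [w1 [E [F [O B]]]]]].
    assert (Hx1: (1 <= length x1)%nat) by (destruct F as [w0 [a [-> _]]]; rewrite length_app; simpl; lia).
    assert (Hl1 : (length w1 <= n)%nat) by (subst w; rewrite length_app in Hl; lia).
    destruct (IH w1 (c - e) Hl1 O) as [v [x [y [E2 [S2 [O2 B2]]]]]].
    exists (e + v), (x1 ++ x), y. split; [subst; rewrite app_assoc; reflexivity|].
    split; [constructor; auto; lia|]. split; [exact O2|lia].
Qed.

Lemma fdecomp h c d w : fpp h c d w ->
  exists v x y, w = x ++ y /\ Sseq h v x /\ fpp h 0 (c + d - v) y /\ 0 <= v <= c.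
Proof.
  intros [w0 [a [-> [O E]]]].
  destruct (key h (length w0) w0 c (le_n _) O) as [v [x [y0 [-> [S1 [O1 B1]]]]]].
  exists v, x, (y0 ++ [a]). split; [rewrite app_assoc; reflexivity|]. split; [exact S1|]. split; [|exact B1].
  exists y0, a. split; [reflexivity|]. split; [exact O1|].
  destruct (Sseq_ok _ _ _ S1) as [_ [Hs _]]. rewrite sumh_app in E. lia.
Qed.

Lemma fpp_bound h c d w (NZ : Z) : fpp h c d w -> (forall s, In s w -> Z.abs (h s) <= NZ) -> d <= NZ.
Proof.
  intros [w0 [a [-> [O E]]]] HN. pose proof (ok_end _ _ _ O).
  assert (Ha := HN a ltac:(apply in_or_app; right; left; reflexivity)).
  lia.
Qed.

Local Open Scope nat_scope.

Definition rules_of (h : step -> Z) (St : list step) (N : nat) : list (nat * list symbol) :=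
  (0, []) :: (1, []) ::
  (flat_map (fun s => flat_map (fun v =>
     if (Z.of_nat v <=? h s)%Z then [(0, [inr s; inl (1+v); inl 0])] else [])
     (seq 0 (N+1))) St ++
  flat_map (fun v => flat_map (fun e =>
     if e <=? v then [(1+v, [inl (1+N+e); inl (1+(v-e))])] else [])
     (seq 1 N)) (seq 1 N) ++
  flat_map (fun s => flat_map (fun d =>
     if (h s =? - Z.of_nat d)%Z then [(1+N+d, [@inr nat step s])] else [])
     (seq 1 N)) St ++
  flat_map (fun s => flat_map (fun v => flat_map (fun d =>
     if andb (Z.of_nat v <=? h s)%Z (h s + Z.of_nat d - Z.of_nat v <=? Z.of_nat N)%Z
     then [(1+N+d, [inr s; inl (1+v); inl (1+N+Z.to_nat (h s + Z.of_nat d - Z.of_nat v))])] else [])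
     (seq 1 N)) (seq 0 (N+1))) St).

Lemma rule_cases h St N A rhs : In (A, rhs) (rules_of h St N) ->
  (A = 0 /\ rhs = []) \/ (A = 1 /\ rhs = []) \/
  (exists s v, In s St /\ v <= N /\ (Z.of_nat v <= h s)%Z /\ A = 0 /\ rhs = [inr s; inl (1+v); inl 0]) \/
  (exists v e, 1 <= e <= v /\ v <= N /\ A = 1 + v /\ rhs = [inl (1+N+e); inl (1+(v-e))]) \/
  (exists s d, In s St /\ 1 <= d <= N /\ h s = (- Z.of_nat d)%Z /\ A = 1+N+d /\ rhs = [inr s]) \/
  (exists s v d, In s St /\ v <= N /\ 1 <= d <= N /\ (Z.of_nat v <= h s)%Z /\
     (h s + Z.of_nat d - Z.of_nat v <= Z.of_nat N)%Z /\ A = 1+N+d /\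
     rhs = [inr s; inl (1+v); inl (1+N+Z.to_nat (h s + Z.of_nat d - Z.of_nat v))]).
Proof.
  unfold rules_of. intro H. destruct H as [H|[H|H]].
  - left. inversion H. split; reflexivity.
  - right; left. inversion H. split; reflexivity.
  - rewrite !in_app_iff in H. destruct H as [H|[H|[H|H]]].
    + do 2 right; left.
      apply in_flat_map in H as [s [Hs H]]. apply in_flat_map in H as [v [Hv H]].
      apply in_seq in Hv.
      destruct (Z.of_nat v <=? h s)%Z eqn:E; [|destruct H].
      destruct H as [H|[]]. inversion H; subst. apply Z.leb_le in E.
      exists s, v. repeat split; auto; lia.
    + do 3 right; left.
      apply in_flat_map in H as [v [Hv H]]. apply in_flat_map in H as [e [He H]].
      apply in_seq in Hv. apply in_seq in He.
      destruct (e <=? v) eqn:E; [|destruct H].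
      destruct H as [H|[]]. inversion H; subst. apply Nat.leb_le in E.
      exists v, e. repeat split; auto; lia.
    + do 4 right; left.
      apply in_flat_map in H as [s [Hs H]]. apply in_flat_map in H as [d [Hd H]].
      apply in_seq in Hd.
      destruct (h s =? - Z.of_nat d)%Z eqn:E; [|destruct H].
      destruct H as [H|[]]. inversion H; subst. apply Z.eqb_eq in E.
      exists s, d. repeat split; auto; lia.
    + do 5 right.
      apply in_flat_map in H as [s [Hs H]]. apply in_flat_map in H as [v [Hv H]].
      apply in_flat_map in H as [d [Hd H]].
      apply in_seq in Hv. apply in_seq in Hd.
      destruct (andb (Z.of_nat v <=? h s)%Z (h s + Z.of_nat d - Z.of_nat v <=? Z.of_nat N)%Z) eqn:E; [|destruct H].
      destruct H as [H|[]]. inversion H; subst. apply Bool.andb_true_iff in E as [E1 E2].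
      apply Z.leb_le in E1. apply Z.leb_le in E2.
      exists s, v, d. repeat split; auto; lia.
Qed.

Lemma in_rM h St N s v : In s St -> v <= N -> (Z.of_nat v <= h s)%Z ->
  In (0, [inr s; inl (1+v); inl 0]) (rules_of h St N).
Proof.
  intros Hs Hv Hh. unfold rules_of. right; right. apply in_or_app; left.
  apply in_flat_map. exists s; split; auto.
  apply in_flat_map. exists v. split; [apply in_seq; lia|].
  apply Z.leb_le in Hh. rewrite Hh. left; reflexivity.
Qed.

Lemma in_rS h St N e v : 1 <= e -> e + v <= N ->
  In (1 + (e + v), [inl (1+N+e); inl (1+v)]) (rules_of h St N).
Proof.
  intros He Hv. unfold rules_of. right; right. apply in_or_app; right. apply in_or_app; left.
  apply in_flat_map. exists (e+v); split; [apply in_seq; lia|].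
  apply in_flat_map. exists e. split; [apply in_seq; lia|]. cbv beta.
  assert (E : (e <=? e + v) = true) by (apply Nat.leb_le; lia). rewrite E.
  replace (e + v - e) with v by lia. left; reflexivity.
Qed.

Lemma in_rF1 h St N s d : In s St -> 1 <= d <= N -> h s = (- Z.of_nat d)%Z ->
  In (1+N+d, [inr s]) (rules_of h St N).
Proof.
  intros Hs Hd Hh. unfold rules_of. right; right.
  apply in_or_app; right. apply in_or_app; right. apply in_or_app; left.
  apply in_flat_map. exists s; split; auto.
  apply in_flat_map. exists d. split; [apply in_seq; lia|].
  apply Z.eqb_eq in Hh. rewrite Hh. left; reflexivity.
Qed.

Lemma in_rF2 h St N s v d : In s St -> v <= N -> 1 <= d <= N -> (Z.of_nat v <= h s)%Z ->
     (h s + Z.of_nat d - Z.of_nat v <= Z.of_nat N)%Z ->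
  In (1+N+d, [inr s; inl (1+v); inl (1+N+Z.to_nat (h s + Z.of_nat d - Z.of_nat v))]) (rules_of h St N).
Proof.
  intros Hs Hv Hd H1 H2. unfold rules_of. right; right.
  apply in_or_app; right. apply in_or_app; right. apply in_or_app; right.
  apply in_flat_map. exists s; split; auto.
  apply in_flat_map. exists v. split; [apply in_seq; lia|].
  apply in_flat_map. exists d. split; [apply in_seq; lia|].
  apply Z.leb_le in H1. apply Z.leb_le in H2. rewrite H1, H2. left; reflexivity.
Qed.

Lemma flat_map_len {A B} (f : A -> list B) l k :
  (forall x, length (f x) <= k) -> length (flat_map f l) <= length l * k.
Proof.
  intro H. induction l as [|a l IH]; simpl; [lia|]. rewrite length_app. specialize (H a). lia.
Qed.

Lemma if_len {B} (b : bool) (x : B) : length (if b then [x] else []) <= 1.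
Proof. destruct b; simpl; lia. Qed.

Lemma rules_len h St N : length (rules_of h St N) <= 2 * (length St + 1) * (N + 1) * (N + 1).
Proof.
  unfold rules_of. simpl length. rewrite !length_app.
  match goal with |- context [length (flat_map ?f1 St) + (length (flat_map ?f2 (seq 1 N)) + (length (flat_map ?f3 St) + length (flat_map ?f4 St)))] =>
    assert (A1 : length (flat_map f1 St) <= length St * (length (seq 0 (N+1)) * 1))
      by (apply flat_map_len; intro; apply flat_map_len; intro; apply if_len);
    assert (A2 : length (flat_map f2 (seq 1 N)) <= length (seq 1 N) * (length (seq 1 N) * 1))
      by (apply flat_map_len; intro; apply flat_map_len; intro; apply if_len);
    assert (A3 : length (flat_map f3 St) <= length St * (length (seq 1 N) * 1))
      by (apply flat_map_len; intro; apply flat_map_len; intro; apply if_len);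
    assert (A4 : length (flat_map f4 St) <= length St * (length (seq 0 (N+1)) * (length (seq 1 N) * 1)))
      by (apply flat_map_len; intro; apply flat_map_len; intro; apply flat_map_len; intro; apply if_len)
  end.
  rewrite !length_seq in *. nia.
Qed.

Definition Gof h St N : cfg := {| nnt := 2*N+2; start := 0; rules := rules_of h St N |}.

Scheme derives_mut := Induction for derives Sort Prop
with derives_seq_mut := Induction for derives_seq Sort Prop.

Fixpoint semseq (sem : nat -> list step -> Prop) (rhs : list symbol) (w : list step) : Prop :=
  match rhs with
  | [] => w = []
  | inr t :: r => exists w', w = t :: w' /\ semseq sem r w'
  | inl B :: r => exists u w', w = u ++ w' /\ sem B u /\ semseq sem r w'
  end.

Lemma derives_sound G (sem : nat -> list step -> Prop) :
  (forall A rhs w, In (A, rhs) (rules G) -> semseq sem rhs w -> sem A w) ->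
  forall A w, derives G A w -> sem A w.
Proof.
  intros H A w D.
  apply (derives_mut G (fun A w _ => sem A w) (fun rhs w _ => semseq sem rhs w)).
  - intros A0 rhs w0 i d IH. eapply H; eauto.
  - simpl. reflexivity.
  - intros t rhs w0 d IH. simpl. eauto.
  - intros B rhs u w0 d1 IH1 d2 IH2. simpl. eauto 7.
  - exact D.
Qed.

Definition semA h N (A : nat) (w : list step) : Prop :=
  (A = 0 -> ok h 0 w) /\
  (forall v, A = 1 + v -> v <= N -> Sseq h (Z.of_nat v) w) /\
  (forall d, A = 1 + N + d -> 1 <= d -> fpp h 0 (Z.of_nat d) w).

Lemma semA_0 h N w : ok h 0 w -> semA h N 0 w.
Proof. intro H. split; [auto|split; intros; lia]. Qed.
Lemma semA_S h N v w : v <= N -> Sseq h (Z.of_nat v) w -> semA h N (1+v) w.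
Proof.
  intros Hv H. split; [intros; lia|split].
  - intros v' E _. assert (v' = v) by lia. subst; auto.
  - intros; lia.
Qed.
Lemma semA_F h N d w : 1 <= d -> fpp h 0 (Z.of_nat d) w -> semA h N (1+N+d) w.
Proof.
  intros Hd H. split; [intros; lia|split].
  - intros; lia.
  - intros d' E _. assert (d' = d) by lia. subst; auto.
Qed.

Lemma rules_sound h St N : forall A rhs w, In (A, rhs) (rules (Gof h St N)) ->
  semseq (semA h N) rhs w -> semA h N A w.
Proof.
  intros A rhs w Hin Hs. apply rule_cases in Hin.
  destruct Hin as [[-> ->]|[[-> ->]|[H|[H|[H|H]]]]].
  - simpl in Hs. subst w. apply semA_0. simpl. split; [lia|exact I].
  - simpl in Hs. subst w. apply (semA_S h N 0); [lia|constructor].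
  - destruct H as [s [v [Hs' [Hv [Hh [-> ->]]]]]].
    simpl in Hs. destruct Hs as [w1 [-> [u [w2 [-> [Su [u2 [w3 [-> [S0 ->]]]]]]]]]].
    apply semA_0. rewrite app_nil_r.
    pose proof ((proj1 (proj2 Su)) v eq_refl Hv) as Sq.
    pose proof ((proj1 S0) eq_refl) as O.
    destruct (Sseq_ok _ _ _ Sq) as [O1 [S1 _]].
    simpl. split; [lia|]. apply ok_app. split.
    + eapply ok_mono; eauto.
    + eapply ok_mono; eauto. lia.
  - destruct H as [v [e [He [Hv [-> ->]]]]].
    simpl in Hs. destruct Hs as [u [w1 [-> [Su [u2 [w3 [-> [S2 ->]]]]]]]].
    rewrite app_nil_r. apply semA_S; [lia|].
    pose proof ((proj2 (proj2 Su)) e eq_refl ltac:(lia)) as F.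
    pose proof ((proj1 (proj2 S2)) (v - e) eq_refl ltac:(lia)) as Sq.
    replace (Z.of_nat v) with (Z.of_nat e + Z.of_nat (v - e))%Z by lia.
    constructor; auto. lia.
  - destruct H as [s [d [Hs' [Hd [Hh [-> ->]]]]]].
    simpl in Hs. destruct Hs as [w1 [-> ->]].
    apply semA_F; [lia|]. exists [], s. split; [reflexivity|]. split; [simpl; split; [lia|exact I]|].
    simpl. lia.
  - destruct H as [s [v [d [Hs' [Hv [Hd [H1 [H2 [-> ->]]]]]]]]].
    simpl in Hs. destruct Hs as [w1 [-> [u [w2 [-> [Su [u2 [w3 [-> [S2 ->]]]]]]]]]].
    rewrite app_nil_r. apply semA_F; [lia|].
    pose proof ((proj1 (proj2 Su)) v eq_refl Hv) as Sq.
    pose proof ((proj2 (proj2 S2)) _ eq_refl ltac:(lia)) as F.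
    rewrite Z2Nat.id in F by lia.
    destruct (Sseq_ok _ _ _ Sq) as [O1 [S1 _]].
    destruct F as [y0 [a [-> [O2 E2]]]].
    exists (s :: u ++ y0), a. split; [rewrite app_assoc; reflexivity|]. split.
    + simpl. split; [lia|]. apply ok_app. split.
      * eapply ok_mono; eauto.
      * eapply ok_mono; eauto. lia.
    + simpl. rewrite sumh_app. lia.
Qed.

Lemma rule_terms h St N A rhs : In (A, rhs) (rules_of h St N) ->
  (A < 2*N+2 /\ forall x, In x rhs -> match x with inl B => B < 2*N+2 | inr t => In t St end).
Proof.
  intro Hin. apply rule_cases in Hin.
  destruct Hin as [[-> ->]|[[-> ->]|[H|[H|[H|H]]]]].
  - split; [lia|]. intros x [].
  - split; [lia|]. intros x [].
  - destruct H as [s [v [Hs' [Hv [Hh [-> ->]]]]]]. split; [lia|].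
    intros x Hx. simpl in Hx. destruct Hx as [<-|[<-|[<-|[]]]]; auto; lia.
  - destruct H as [v [e [He [Hv [-> ->]]]]]. split; [lia|].
    intros x Hx. simpl in Hx. destruct Hx as [<-|[<-|[]]]; lia.
  - destruct H as [s [d [Hs' [Hd [Hh [-> ->]]]]]]. split; [lia|].
    intros x Hx. simpl in Hx. destruct Hx as [<-|[]]; auto.
  - destruct H as [s [v [d [Hs' [Hv [Hd [H1 [H2 [-> ->]]]]]]]]]. split; [lia|].
    intros x Hx. simpl in Hx. destruct Hx as [<-|[<-|[<-|[]]]]; auto; lia.
Qed.

Lemma semseq_letters St rhs : forall w,
  (forall t, In (inr t) rhs -> In t St) ->
  semseq (fun _ w => forall t, In t w -> In t St) rhs w -> forall t, In t w -> In t St.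
Proof.
  induction rhs as [|[B|t0] r IH]; intros w Hr Hs t Ht; simpl in Hs.
  - subst; destruct Ht.
  - destruct Hs as [u [w' [-> [Hu Hw']]]]. apply in_app_or in Ht as [Ht|Ht]; auto.
    eapply IH; eauto. intros; apply Hr; right; auto.
  - destruct Hs as [w' [-> Hw']]. destruct Ht as [<-|Ht].
    + apply Hr; left; reflexivity.
    + eapply IH; eauto. intros; apply Hr; right; auto.
Qed.

Lemma letters_sound h St N A w : derives (Gof h St N) A w -> forall t, In t w -> In t St.
Proof.
  revert A w. apply (derives_sound (Gof h St N) (fun _ w => forall t, In t w -> In t St)).
  intros A rhs w Hin Hs. apply semseq_letters with rhs; auto.
  intros t Ht. destruct (rule_terms h St N A rhs Hin) as [_ H]. exact (H _ Ht).
Qed.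

Lemma compl h St N (HN : forall s, In s St -> (Z.abs (h s) <= Z.of_nat N)%Z) :
  forall n w, length w < n -> (forall s, In s w -> In s St) ->
   (forall dz, (1 <= dz <= Z.of_nat N)%Z -> fpp h 0 dz w -> derives (Gof h St N) (1+N+Z.to_nat dz) w) /\
   (forall vz, Sseq h vz w -> (vz <= Z.of_nat N)%Z -> derives (Gof h St N) (1+Z.to_nat vz) w) /\
   (ok h 0 w -> derives (Gof h St N) 0 w).
Proof.
  induction n as [|n IH]; intros w Hl Hw; [lia|].
  assert (HF : forall w, length w <= n -> (forall s, In s w -> In s St) ->
     forall dz, (1 <= dz <= Z.of_nat N)%Z -> fpp h 0 dz w -> derives (Gof h St N) (1+N+Z.to_nat dz) w).
  { clear w Hl Hw. intros w Hl Hw dz Hdz Hf.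
    destruct Hf as [w0 [a [Ew [O E]]]].
    destruct w0 as [|b w1].
    - subst w. simpl in E. apply der_rule with [inr a].
      + apply in_rF1; [apply Hw; simpl; auto|lia|lia].
      + apply ds_term. apply ds_nil.
    - simpl in O. destruct O as [_ O].
      assert (Hf' : fpp h (h b) dz (w1 ++ [a])).
      { exists w1, a. split; [reflexivity|]. split; [exact O|]. simpl in E. lia. }
      destruct (fdecomp _ _ _ _ Hf') as [v [x [y [Exy [Sx [Fy Bv]]]]]].
      assert (Hwx : forall s, In s x -> In s St).
      { intros s Hs. apply Hw. rewrite Ew. simpl. right. rewrite Exy. apply in_or_app; auto. }
      assert (Hwy : forall s, In s y -> In s St).
      { intros s Hs. apply Hw. rewrite Ew. simpl. right. rewrite Exy. apply in_or_app; auto. }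
      assert (Hd' : (h b + dz - v <= Z.of_nat N)%Z).
      { apply (fpp_bound h 0 _ y); auto. }
      assert (Hlen : length w = S (length x + length y)).
      { rewrite Ew. simpl. f_equal. rewrite <- length_app, <- Exy. reflexivity. }
      destruct (Sseq_ok _ _ _ Sx) as [_ [_ Hv0]].
      destruct (IH x ltac:(lia) Hwx) as [_ [IHx _]].
      destruct (IH y ltac:(lia) Hwy) as [IHy _].
      assert (Hb : In b St) by (apply Hw; rewrite Ew; simpl; auto).
      pose proof (HN b Hb) as Hbn.
      pose proof (IHx v Sx ltac:(lia)) as Dx.
      pose proof (IHy (h b + dz - v)%Z ltac:(lia) Fy) as Dy.
      pose proof (in_rF2 h St N b (Z.to_nat v) (Z.to_nat dz) Hb ltac:(lia) ltac:(lia) ltac:(lia) ltac:(lia)) as Hin.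
      rewrite !Z2Nat.id in Hin by lia.
      assert (Ew' : w = b :: (x ++ (y ++ []))) by (rewrite app_nil_r, <- Exy, Ew; reflexivity).
      rewrite Ew'. eapply der_rule; [exact Hin|].
      apply ds_term. apply ds_nt; [exact Dx|]. apply ds_nt; [exact Dy|]. apply ds_nil. }
  assert (HS : forall w, length w <= n -> (forall s, In s w -> In s St) ->
     forall vz, Sseq h vz w -> (vz <= Z.of_nat N)%Z -> derives (Gof h St N) (1+Z.to_nat vz) w).
  { clear w Hl Hw. intros w Hl Hw vz Hs Hvz.
    destruct Hs as [|e v x y He Hx Hy].
    - eapply der_rule; [exact (or_intror (or_introl eq_refl))|]. apply ds_nil.
    - destruct (Sseq_ok _ _ _ Hy) as [_ [_ Hv0]].
      assert (Hx1: 1 <= length x) by (destruct Hx as [w0 [a [-> _]]]; rewrite length_app; simpl; lia).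
      rewrite length_app in Hl.
      assert (Hwx : forall s, In s x -> In s St) by (intros; apply Hw; apply in_or_app; auto).
      assert (Hwy : forall s, In s y -> In s St) by (intros; apply Hw; apply in_or_app; auto).
      pose proof (HF x ltac:(lia) Hwx e ltac:(lia) Hx) as Dx.
      destruct (IH y ltac:(lia) Hwy) as [_ [IHy _]].
      pose proof (IHy v Hy ltac:(lia)) as Dy.
      pose proof (in_rS h St N (Z.to_nat e) (Z.to_nat v) ltac:(lia) ltac:(lia)) as Hin.
      rewrite Z2Nat.inj_add by lia. rewrite <- (app_nil_r y).
      eapply der_rule; [exact Hin|].
      apply ds_nt; [exact Dx|]. apply ds_nt; [exact Dy|]. apply ds_nil. }
  split; [apply HF; auto; lia|]. split; [apply HS; auto; lia|].
  intro O. destruct w as [|b w1].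
  - eapply der_rule; [left; reflexivity|]. apply ds_nil.
  - simpl in O. destruct O as [_ O].
    destruct (key h (length w1) w1 (h b) (le_n _) O) as [v [x [y [Exy [Sx [Oy Bv]]]]]].
    assert (Hwx : forall s, In s x -> In s St).
    { intros s Hs. apply Hw. simpl. right. rewrite Exy. apply in_or_app; auto. }
    assert (Hwy : forall s, In s y -> In s St).
    { intros s Hs. apply Hw. simpl. right. rewrite Exy. apply in_or_app; auto. }
    assert (Hb : In b St) by (apply Hw; simpl; auto).
    pose proof (HN b Hb) as Hbn.
    simpl in Hl. rewrite Exy, length_app in Hl.
    pose proof (HS x ltac:(lia) Hwx v Sx ltac:(lia)) as Dx.
    destruct (IH y ltac:(lia) Hwy) as [_ [_ IHy]].
    pose proof (IHy Oy) as Dy.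
    pose proof (in_rM h St N b (Z.to_nat v) Hb ltac:(lia) ltac:(lia)) as Hin.
    rewrite Exy, <- (app_nil_r y).
    eapply der_rule; [exact Hin|].
    apply ds_term. apply ds_nt; [exact Dx|]. apply ds_nt; [exact Dy|]. apply ds_nil.
Qed.

Lemma ok_prefix h w : forall c, ok h c w <-> (forall k, k <= length w -> (0 <= c + sumh h (firstn k w))%Z).
Proof.
  induction w as [|a w IH]; intro c; simpl.
  - split.
    + intros [H _] k Hk. assert (k = 0) by lia. subst. simpl. lia.
    + intro H. split; [|exact I]. specialize (H 0 (le_n _)). simpl in H. lia.
  - rewrite IH. split.
    + intros [H1 H2] [|k] Hk; simpl; [lia|]. specialize (H2 k ltac:(lia)). lia.
    + intro H. split; [specialize (H 0 ltac:(lia)); simpl in H; lia|].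
      intros k Hk. specialize (H (S k) ltac:(lia)). simpl in H. lia.
Qed.

Definition Kof (St : list step) : Z :=
  fold_right (fun s acc => (Z.abs (fst s) + Z.abs (snd s) + acc)%Z) 0%Z St.

Lemma Kof_nonneg St : (0 <= Kof St)%Z.
Proof. induction St; simpl; lia. Qed.

Lemma Kof_in St s : In s St -> (Z.abs (fst s) + Z.abs (snd s) <= Kof St)%Z.
Proof.
  induction St as [|a St IH]; simpl; [tauto|]. intros [->|H].
  - pose proof (Kof_nonneg St). lia.
  - specialize (IH H). lia.
Qed.

Lemma vsum_h p q w : sumh (fun s => p * fst s + q * snd s)%Z w = (p * fst (vsum w) + q * snd (vsum w))%Z.
Proof. induction w as [|a w IH]; simpl; [lia|]. rewrite IH. ring. Qed.

Open Scope R_scope.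

Lemma inH_iff p q v : (0 < q)%Z ->
  inH (atan (IZR p / IZR q)) v <-> (0 <= p * fst v + q * snd v)%Z.
Proof.
  intro Hq. set (th := atan (IZR p / IZR q)).
  assert (Hc : 0 < cos th) by (destruct (atan_bound (IZR p / IZR q)); apply cos_gt_0; unfold th; lra).
  assert (Hqr : 0 < IZR q) by (apply IZR_lt; lia).
  assert (Ht : tan th = IZR p / IZR q) by apply tan_atan.
  assert (Hs : sin th = IZR p / IZR q * cos th).
  { rewrite <- Ht. unfold tan. field. lra. }
  unfold inH. rewrite Hs.
  assert (E : IZR (fst v) * (IZR p / IZR q * cos th) + IZR (snd v) * cos th
              = (cos th / IZR q) * IZR (p * fst v + q * snd v)).
  { rewrite plus_IZR, !mult_IZR. field. lra. }
  rewrite E.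
  assert (Hk : 0 < cos th / IZR q) by (apply Rdiv_lt_0_compat; lra).
  split.
  - intro H. destruct (Z_lt_le_dec (p * fst v + q * snd v) 0) as [Hn|Hp]; [|exact Hp].
    exfalso. apply IZR_lt in Hn. nra.
  - intro H. apply IZR_le in H. nra.
Qed.

Theorem mainTheorem8 (S : list step) (theta : R) (Htheta : 0 <= theta < PI / 2) :
  exists C : R, 0 < C /\
  forall delta : R, 0 < delta ->
    exists (G : cfg) (theta_r : R),
      (- (PI / 2) < theta_r < PI / 2) /\
      is_rational (tan theta_r) /\
      Rabs (tan theta - tan theta_r) <= delta /\
      INR (nnt G) <= C * (1 + / delta) /\
      INR (length (rules G)) <= C * (1 + / (delta ^ 2)) /\
      cfg_wf G S /\
      (forall w : list step, generates G w <-> walk_word S theta_r w).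
Proof.
  set (t := tan theta).
  assert (Ht : 0 <= t).
  { unfold t, tan. pose proof PI_RGT_0.
    assert (0 < cos theta) by (apply cos_gt_0; lra).
    assert (0 <= sin theta) by (apply sin_ge_0; lra).
    unfold Rdiv. apply Rmult_le_pos; [lra|]. left; apply Rinv_0_lt_compat; lra. }
  set (K := IZR (Kof S)).
  assert (HK : 0 <= K) by (apply IZR_le; apply Kof_nonneg).
  set (B := (t + 1) * K + 1).
  assert (HB : 1 <= B) by (unfold B; nra).
  set (L := INR (length S)).
  assert (HL : 0 <= L) by apply pos_INR.
  exists (2 * B + 4 * (L + 1) * (B * B)). split; [nra|].
  intros delta Hd.
  set (x := / delta).
  assert (Hx : 0 < x) by (apply Rinv_0_lt_compat; lra).
  set (q := up x). destruct (archimed x) as [Hq1 Hq2]. fold q in Hq1, Hq2.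
  assert (Hq0 : (0 < q)%Z) by (apply lt_0_IZR; lra).
  assert (Hqr : 0 < IZR q) by lra.
  set (p := (up (t * IZR q) - 1)%Z).
  destruct (archimed (t * IZR q)) as [Hp1 Hp2].
  assert (Hpq : IZR p <= t * IZR q < IZR p + 1) by (unfold p; rewrite minus_IZR; lra).
  assert (Htq : 0 <= t * IZR q) by nra.
  assert (Hp0 : (0 <= p)%Z) by (assert (-1 < p)%Z by (apply lt_IZR; lra); lia).
  set (h := fun s : step => (p * fst s + q * snd s)%Z).
  set (N := Z.to_nat ((p + q) * Kof S)).
  assert (HNZ : Z.of_nat N = ((p + q) * Kof S)%Z) by (unfold N; rewrite Z2Nat.id; [reflexivity|pose proof (Kof_nonneg S); nia]).
  assert (HN : forall s, In s S -> (Z.abs (h s) <= Z.of_nat N)%Z).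
  { intros s Hs. rewrite HNZ. pose proof (Kof_in S s Hs). unfold h.
    destruct s as [a b]; simpl in *.
    assert (Z.abs (p * a + q * b) <= p * Z.abs a + q * Z.abs b)%Z.
    { destruct (Z.abs_spec a) as [[? ->]|[? ->]]; destruct (Z.abs_spec b) as [[? ->]|[? ->]];
      destruct (Z.abs_spec (p * a + q * b)) as [[? ->]|[? ->]]; nia. }
    nia. }
  assert (HNR : INR N + 1 <= B * (1 + x)).
  { rewrite INR_IZR_INZ, HNZ, mult_IZR, plus_IZR. fold K. unfold B.
    assert (H1 : (IZR p + IZR q) * K <= (t + 1) * IZR q * K) by nra.
    assert (H2 : (t + 1) * IZR q * K <= (t + 1) * (x + 1) * K).
    { apply Rmult_le_compat_r; [lra|]. apply Rmult_le_compat_l; lra. }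
    assert (H3 : 0 <= (t + 1) * K * x) by (apply Rmult_le_pos; nra).
    nra. }
  exists (Gof h S N), (atan (IZR p / IZR q)).
  split; [destruct (atan_bound (IZR p / IZR q)); lra|].
  split; [exists p, q; split; [lia|apply tan_atan]|].
  split.
  { rewrite tan_atan. fold t.
    assert (E : t - IZR p / IZR q = (t * IZR q - IZR p) * / IZR q) by (field; lra).
    rewrite E.
    assert (Hiq : 0 < / IZR q) by (apply Rinv_0_lt_compat; lra).
    rewrite Rabs_pos_eq by nra.
    assert (Hdx : delta * x = 1) by (unfold x; field; lra).
    assert (Hqq : IZR q * / IZR q = 1) by (field; lra).
    assert (Hdq : 1 < delta * IZR q) by nra.
    assert (E2 : delta = delta * IZR q * / IZR q) by (field; lra).
    assert (H1 : (t * IZR q - IZR p) * / IZR q <= / IZR q) by nra.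
    assert (E3 : delta - / IZR q = (delta * IZR q - 1) * / IZR q) by (field; lra).
    assert (H2 : / IZR q <= delta) by nra.
    lra. }
  split.
  { simpl nnt. rewrite !plus_INR. simpl INR. fold x.
    assert (0 <= 4 * (L + 1) * (B * B) * (1 + x)) by (apply Rmult_le_pos; nra). nra. }
  split.
  { assert (Hlen := rules_len h S N). apply le_INR in Hlen.
    change (rules (Gof h S N)) with (rules_of h S N). rewrite !mult_INR, !plus_INR in Hlen.
    replace (INR 2) with 2 in Hlen by (simpl; lra). replace (INR 1) with 1 in Hlen by reflexivity. fold L in Hlen.
    assert (Ex : / (delta ^ 2) = x * x) by (unfold x; field; lra).
    rewrite Ex.
    set (a := INR N + 1) in *.
    assert (Ha : 0 < a) by (unfold a; pose proof (pos_INR N); lra).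
    assert (Ha2 : a * a <= (B * (1 + x)) * (B * (1 + x))) by nra.
    assert (Hx2 : (1 + x) * (1 + x) <= 2 * (1 + x * x)) by (pose proof (Rle_0_sqr (1 - x)); unfold Rsqr in *; nra).
    assert (Ha3 : a * a <= 2 * (B * B) * (1 + x * x)) by nra.
    assert (HBB : 0 <= B * B) by nra.
    assert (Hxx : 0 <= x * x) by nra.
    assert (Hl2 : 2 * (L + 1) * a * a <= 4 * (L + 1) * (B * B) * (1 + x * x)) by nra.
    assert (0 <= 2 * B * (1 + x * x)) by nra.
    nra. }
  split.
  { split; [simpl; lia|]. intros A rhs Hin. exact (rule_terms h S N A rhs Hin). }
  intro w. unfold generates, walk_word. simpl start. split.
  - intro D. split; [exact (letters_sound h S N 0 w D)|].
    pose proof (derives_sound _ (semA h N) (rules_sound h S N) 0 w D) as Hs.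
    pose proof ((proj1 Hs) eq_refl) as O.
    pose proof (proj1 (ok_prefix h w 0%Z) O) as O'. clear O. rename O' into O. intros k Hk. apply inH_iff; [exact Hq0|].
    specialize (O k Hk). unfold h in O. rewrite vsum_h in O. lia.
  - intros [Hl Hp].
    assert (O : ok h 0 w).
    { apply (proj2 (ok_prefix h w 0%Z)). intros k Hk. specialize (Hp k Hk). apply inH_iff in Hp; [|exact Hq0].
      unfold h. rewrite vsum_h. lia. }
    exact (proj2 (proj2 (compl h S N HN (Nat.succ (length w)) w (Nat.lt_succ_diag_r _) Hl)) O).
Qed.
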